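(* For every real $r\ge1$ and every $x\in\mathbb{R}$, \[ f_r(x)\ge 2^{1-r}\sum_{m\ge0}s_m(x)^r, \] with equality when $x=\tfrac12$.
   Context: For $y\in\mathbb{R}$ let $\operatorname{sinc}(y)=\frac{\sin y}{y}$ for $y\neq0$ and $\operatorname{sinc}(0)=1$, and let $h(y)=\operatorname{sinc}^2(\pi y)$. For $r\ge1$, $f_r(x)=\sum_{m\in\mathbb{Z}}h(x+m)^r$, and for integers $m\ge0$, $s_m(x)=h(x+m)+h(x-(m+1))$. *)

(* Defs.v *)
From Stdlib Require Import Reals.
From Coquelicot Require Import Coquelicot.
Open Scope R_scope.

Definition sinc (y : R) : R := if Req_EM_T y 0 then 1 else sin y / y.

Definition h (y : R) : R := (sinc (PI * y)) ^ 2.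

(* real power a^r for a >= 0, with the convention 0^r = 0 (r >= 1 > 0) *)
Definition rpow (a r : R) : R := if Rle_dec a 0 then 0 else Rpower a r.

(* f_r(x) = sum_{m in Z} h(x+m)^r, split as m >= 0 plus m = -(k+1), k >= 0 *)
Definition fr (r x : R) : R :=
  Series (fun m : nat => rpow (h (x + INR m)) r)
  + Series (fun k : nat => rpow (h (x - INR (S k))) r).

Definition sm (m : nat) (x : R) : R := h (x + INR m) + h (x - INR (S m)).

(* Main.v *)
Require Import Defs.
From Stdlib Require Import Reals Lra Lia Psatz.
From Coquelicot Require Import Coquelicot.
Open Scope R_scope.

Lemma tele_series :
  ex_series (fun n : nat => / (INR n + 1) - / (INR (S n) + 1)).
Proof.
  exists 1.
  assert (Hs : forall n, sum_n (fun n : nat => / (INR n + 1) - / (INR (S n) + 1)) n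
                = 1 - / (INR (S n) + 1)).
  { induction n.
    - rewrite sum_O. simpl. replace (0+1) with 1 by lra. rewrite Rinv_1. lra.
    - rewrite sum_Sn, IHn. unfold plus; simpl. lra. }
  assert (Hl : is_lim_seq (fun n => 1 - / (INR (S n) + 1)) 1).
  { assert (E: Finite 1 = Finite (1 - 0)) by (f_equal; lra). rewrite E.
    apply (is_lim_seq_minus' (fun _ => 1) _ 1 0).
    apply is_lim_seq_const.
    replace (Finite 0) with (Rbar_inv p_infty) by reflexivity.
    apply (is_lim_seq_inv _ p_infty).
    apply (is_lim_seq_incr_1 (fun n => INR n + 1)).
    eapply is_lim_seq_plus. apply is_lim_seq_INR. apply is_lim_seq_const.
    reflexivity.
    discriminate. }
  unfold is_series.
  eapply filterlim_ext. intro n. symmetry. apply Hs.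
  exact Hl.
Qed.

Lemma inv_sq_series : ex_series (fun n : nat => / (INR n + 1) ^ 2).
Proof.
  apply (@ex_series_le R_AbsRing R_CompleteNormedModule _ (fun n => 2 * (/ (INR n + 1) - / (INR (S n) + 1)))).
  - intro n. rewrite S_INR. pose proof (pos_INR n).
    change norm with Rabs.
    rewrite Rabs_pos_eq by (apply Rlt_le, Rinv_0_lt_compat; nra).
    assert (H1 : / (INR n + 1 + 1) = (INR n + 1) / ((INR n+1)*(INR n + 1 + 1))) by (field; lra).
    assert (H2 : / (INR n + 1) = (INR n + 1 + 1) / ((INR n+1)*(INR n + 1 + 1))) by (field; lra).
    assert (H3 : / (INR n + 1)^2 = 1 / ((INR n+1)*(INR n+1))) by (field; lra).
    rewrite H1, H2, H3.
    unfold Rdiv. rewrite <- Rmult_minus_distr_r.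
    apply Rmult_le_reg_r with ((INR n+1)*(INR n + 1) * (INR n + 1 + 1)). nra.
    field_simplify; nra.
  - apply (ex_series_scal_l 2 _ tele_series).
Qed.

Lemma abs_sin_le_pos (z : R) : 0 < z -> Rabs (sin z) <= z.
Proof.
  intro H. pose proof PI2_3_2. pose proof (SIN_bound z).
  destruct (Rle_or_lt z PI) as [A|A].
  - rewrite Rabs_pos_eq by (apply sin_ge_0; lra). pose proof (sin_lt_x z H). lra.
  - apply Rabs_le. lra.
Qed.

Lemma abs_sin_le (z : R) : Rabs (sin z) <= Rabs z.
Proof.
  destruct (Rtotal_order z 0) as [H|[H|H]].
  - rewrite <- Rabs_Ropp, <- sin_neg, (Rabs_left z) by lra. apply abs_sin_le_pos. lra.
  - subst. rewrite sin_0, Rabs_R0. lra.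
  - rewrite (Rabs_pos_eq z) by lra. now apply abs_sin_le_pos.
Qed.

Lemma h_nonneg y : 0 <= h y.
Proof. unfold h. apply pow2_ge_0. Qed.

Lemma h_even y : h (- y) = h y.
Proof.
  unfold h, sinc. rewrite Ropp_mult_distr_r_reverse.
  destruct (Req_EM_T (- (PI * y)) 0); destruct (Req_EM_T (PI * y) 0); try lra.
  rewrite sin_neg. unfold Rdiv. rewrite <- Ropp_inv_permute by auto. ring.
Qed.

Lemma h_bound y : h y * (1 + y ^ 2) <= 2.
Proof.
  pose proof PI2_3_2 as HP.
  unfold h, sinc. destruct (Req_EM_T (PI * y) 0) as [E|E].
  - assert (y = 0) by nra. subst. lra.
  - assert (Hy : y <> 0) by (intro; subst; apply E; ring).
    pose proof (abs_sin_le (PI * y)) as A. pose proof (SIN_bound (PI*y)).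
    assert (B : sin (PI*y) ^ 2 <= (PI*y)^2).
    { rewrite <- (pow2_abs (sin _)), <- (pow2_abs (PI*y)).
      pose proof (Rabs_pos (sin (PI*y))). nra. }
    assert (C : sin (PI*y) ^ 2 <= 1) by nra.
    assert (D : (PI*y)^2 > 0) by (apply pow2_gt_0; auto).
    replace ((sin (PI * y) / (PI * y)) ^ 2) with (sin (PI*y)^2 / (PI*y)^2) by (field; repeat split; auto; apply PI_neq0).
    apply Rmult_le_reg_r with ((PI*y)^2); auto.
    replace (sin (PI * y) ^ 2 / (PI * y) ^ 2 * (1 + y ^ 2) * (PI * y) ^ 2)
      with (sin (PI * y) ^ 2 * (1 + y ^ 2)) by (field; lra).
    assert (PI^2 >= 1) by nra. pose proof (pow2_ge_0 y).
    assert (PI^2 * y^2 >= y^2) by nra.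
    replace ((PI*y)^2) with (PI^2*y^2) in * by ring.
    nra.
Qed.

Lemma rpow_nonneg a r : 0 <= rpow a r.
Proof.
  unfold rpow. destruct (Rle_dec a 0). lra. unfold Rpower. apply Rlt_le, exp_pos.
Qed.

Lemma rpow_le_self a r : 1 <= r -> 0 <= a <= 1 -> rpow a r <= a.
Proof.
  intros Hr Ha. unfold rpow. destruct (Rle_dec a 0). lra.
  unfold Rpower. rewrite <- (exp_ln a) at 2 by lra.
  assert (ln a <= 0). { rewrite <- ln_1. apply ln_le; lra. }
  destruct (Req_dec (r * ln a) (ln a)) as [E|E]. rewrite E; lra.
  apply Rlt_le, exp_increasing. nra.
Qed.

Lemma Rpower_base1 r : Rpower 1 r = 1.
Proof. unfold Rpower. rewrite ln_1, Rmult_0_r. apply exp_0. Qed.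

Lemma bernoulli w r : 0 < w -> 1 <= r -> Rpower w r >= 1 + r * (w - 1).
Proof.
  intros Hw Hr.
  set (f := fun t => Rpower t r - r * t).
  set (df := fun t => r * Rpower t (r - 1) - r).
  assert (Hd : forall t, 0 < t -> derivable_pt_lim f t (df t)).
  { intros t Ht. unfold f, df.
    apply derivable_pt_lim_minus.
    - now apply derivable_pt_lim_power.
    - replace r with (r * 1) at 2 by ring.
      apply derivable_pt_lim_scal. apply derivable_pt_lim_id. }
  assert (Hpos : 0 < Rmin 1 w) by (apply Rmin_glb_lt; lra).
  destruct (MVT_gen f 1 w df) as [c [[Hc1 Hc2] Hc]].
  - intros t Ht. apply is_derive_Reals. apply Hd. lra.
  - intros t Ht. apply derivable_continuous_pt. exists (df t). apply Hd. lra.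
  - unfold f in Hc. rewrite Rpower_base1 in Hc. unfold df in Hc.
    assert (Hcp : 0 < c) by lra.
    assert (df c * (w - 1) >= 0).
    { unfold df. unfold Rpower.
      destruct (Rle_or_lt 1 w) as [W|W].
      + rewrite Rmin_left in Hc1 by lra.
        assert (0 <= ln c) by (rewrite <- ln_1; apply ln_le; lra).
        assert (exp ((r-1) * ln c) >= exp 0).
        { destruct (Req_dec ((r-1) * ln c) 0) as [E|E].
          rewrite E; lra. left. apply exp_increasing.
          assert (0 <= (r-1) * ln c) by nra. lra. }
        rewrite exp_0 in *. set (X := exp ((r-1) * ln c)) in *.
        assert (r * X - r = r * (X - 1)) as -> by ring.
        apply Rle_ge, Rmult_le_pos; nra.
      + rewrite Rmax_left in Hc2 by lra.
        assert (ln c <= 0) by (rewrite <- ln_1; apply ln_le; lra).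
        assert (exp ((r-1) * ln c) <= exp 0).
        { destruct (Req_dec ((r-1) * ln c) 0) as [E|E].
          rewrite E; lra. left. apply exp_increasing.
          assert ((r-1) * ln c <= 0) by nra. lra. }
        rewrite exp_0 in *. set (X := exp ((r-1) * ln c)) in *.
        assert (r * X - r = - (r * (1 - X))) as -> by ring.
        assert (0 <= r * (1 - X)) by nra. nra. }
    unfold df in H. lra.
Qed.

Lemma two_pow r : Rpower 2 (1 - r) * Rpower 2 r = 2.
Proof. rewrite <- Rpower_plus. replace (1 - r + r) with 1 by ring. apply Rpower_1; lra. Qed.

Lemma two_pow_le1 r : 1 <= r -> Rpower 2 (1 - r) <= 1.
Proof.
  intro. apply Rle_trans with (Rpower 2 0); [apply Rle_Rpower; lra | rewrite Rpower_O; lra].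
Qed.

Lemma Rpower_pos x r : 0 < Rpower x r.
Proof. apply exp_pos. Qed.

Lemma pair_ineq a b r : 0 <= a -> 0 <= b -> 1 <= r ->
  Rpower 2 (1 - r) * rpow (a + b) r <= rpow a r + rpow b r.
Proof.
  intros Ha Hb Hr.
  pose proof (two_pow_le1 r Hr). pose proof (Rpower_pos 2 (1 - r)).
  pose proof (rpow_nonneg a r). pose proof (rpow_nonneg b r).
  assert (Z : rpow 0 r = 0) by (unfold rpow; destruct (Rle_dec 0 0); lra).
  destruct (Req_dec a 0) as [Ea|Ea].
  { subst. rewrite Rplus_0_l, Z. nra. }
  destruct (Req_dec b 0) as [Eb|Eb].
  { subst. rewrite Rplus_0_r, Z. nra. }
  unfold rpow. destruct (Rle_dec (a+b) 0); [lra|]. destruct (Rle_dec a 0); [lra|].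
  destruct (Rle_dec b 0); [lra|].
  set (c := (a + b) / 2).
  assert (Hc : 0 < c) by (unfold c; lra).
  assert (HA : Rpower a r = Rpower c r * Rpower (a / c) r).
  { rewrite Rpower_mult_distr; [|lra|]. f_equal. field. lra.
    apply Rdiv_lt_0_compat; lra. }
  assert (HB : Rpower b r = Rpower c r * Rpower (b / c) r).
  { rewrite Rpower_mult_distr; [|lra|]. f_equal. field. lra.
    apply Rdiv_lt_0_compat; lra. }
  assert (HS : Rpower (a + b) r = Rpower 2 r * Rpower c r).
  { rewrite Rpower_mult_distr by lra. f_equal. unfold c; field. }
  pose proof (bernoulli (a / c) r ltac:(apply Rdiv_lt_0_compat; lra) Hr).
  pose proof (bernoulli (b / c) r ltac:(apply Rdiv_lt_0_compat; lra) Hr).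
  pose proof (Rpower_pos c r) as Pc.
  rewrite HA, HB, HS, <- Rmult_assoc, two_pow.
  assert (E : a / c + b / c = 2) by (unfold c; field; lra).
  assert (Rpower (a/c) r + Rpower (b/c) r >= 2) by nra.
  nra.
Qed.

Lemma pair_eq a r : 0 <= a -> 
  rpow a r + rpow a r = Rpower 2 (1 - r) * rpow (a + a) r.
Proof.
  intro Ha. unfold rpow. destruct (Rle_dec a 0); destruct (Rle_dec (a + a) 0); try lra.
  replace (a + a) with (2 * a) by ring. rewrite <- Rpower_mult_distr by lra.
  rewrite <- Rmult_assoc, two_pow. ring.
Qed.

Lemma h_le1 y : h y <= 1.
Proof.
  unfold h, sinc. destruct (Req_EM_T (PI * y) 0) as [E|E]. lra.
  pose proof (abs_sin_le (PI * y)) as A.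
  assert (B : sin (PI*y) ^ 2 <= (PI*y)^2).
  { rewrite <- (pow2_abs (sin _)), <- (pow2_abs (PI*y)).
    pose proof (Rabs_pos (sin (PI*y))). nra. }
  assert (D : (PI*y)^2 > 0) by (apply pow2_gt_0; auto).
  assert (Hy : y <> 0) by (intro; subst; apply E; ring).
  replace ((sin (PI * y) / (PI * y)) ^ 2) with (sin (PI*y)^2 / (PI*y)^2) by (field; repeat split; auto; apply PI_neq0).
  apply Rmult_le_reg_r with ((PI*y)^2); auto.
  replace (sin (PI * y) ^ 2 / (PI * y) ^ 2 * (PI * y) ^ 2) with (sin (PI * y) ^ 2) by (field; repeat split; auto; apply PI_neq0).
  lra.
Qed.

Lemma h_decay y m d : (INR m + 1 = y + d \/ INR m + 1 = - y + d) ->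
  h y <= (4 + 4 * d ^ 2) * / (INR m + 1) ^ 2.
Proof.
  intro H. pose proof (pos_INR m). pose proof (h_bound y). pose proof (h_nonneg y).
  assert (Hm : (INR m + 1) ^ 2 <= (2 + 2 * d^2) * (1 + y^2)).
  { destruct H as [H|H]; rewrite H; nra. }
  assert (P : 0 < (INR m + 1) ^ 2) by (apply pow2_gt_0; lra).
  apply Rmult_le_reg_r with ((INR m + 1) ^ 2); auto.
  rewrite Rmult_assoc, Rinv_l by lra.
  assert (h y * (INR m + 1) ^ 2 <= h y * ((2 + 2 * d^2) * (1 + y^2))) by
    (apply Rmult_le_compat_l; auto).
  pose proof (pow2_ge_0 d). nra.
Qed.

Lemma ex_rpow_h r (x : R) (sgn : bool) (d : R) (g : nat -> R) : 1 <= r ->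
  (forall m, INR m + 1 = g m + d \/ INR m + 1 = - g m + d) ->
  ex_series (fun m => rpow (h (g m)) r).
Proof.
  intros Hr Hg.
  apply (@ex_series_le R_AbsRing R_CompleteNormedModule _
          (fun n => (4 + 4 * d ^ 2) * / (INR n + 1) ^ 2)).
  - intro n. change norm with Rabs.
    rewrite Rabs_pos_eq by apply rpow_nonneg.
    eapply Rle_trans. apply rpow_le_self; auto. split. apply h_nonneg. apply h_le1.
    apply h_decay. apply Hg.
  - apply (ex_series_scal_l (4 + 4 * d ^ 2) _ inv_sq_series).
Qed.

Lemma exA r x : 1 <= r -> ex_series (fun m : nat => rpow (h (x + INR m)) r).
Proof.
  intro Hr. apply (ex_rpow_h r x true (1 - x) (fun m => x + INR m) Hr).
  intro m. left. ring.
Qed.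

Lemma exB r x : 1 <= r -> ex_series (fun k : nat => rpow (h (x - INR (S k))) r).
Proof.
  intro Hr. apply (ex_rpow_h r x true x (fun m => x - INR (S m)) Hr).
  intro m. right. rewrite S_INR. ring.
Qed.

Lemma fr_sum r x : 1 <= r -> fr r x =
  Series (fun m => rpow (h (x + INR m)) r + rpow (h (x - INR (S m))) r).
Proof.
  intro Hr. unfold fr. rewrite Series_plus; auto using exA, exB.
Qed.

Theorem mainTheorem6 :
  (forall r x : R, 1 <= r ->
     fr r x >= Rpower 2 (1 - r) * Series (fun m : nat => rpow (sm m x) r))
  /\
  (forall r : R, 1 <= r ->
     fr r (1/2) = Rpower 2 (1 - r) * Series (fun m : nat => rpow (sm m (1/2)) r)).
Proof.
  split.
  - intros r x Hr. rewrite fr_sum by auto. rewrite <- Series_scal_l.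
    apply Rle_ge, Series_le.
    + intro n. split.
      * apply Rmult_le_pos. apply Rlt_le, Rpower_pos. apply rpow_nonneg.
      * unfold sm. apply pair_ineq; auto using h_nonneg.
    + apply (ex_series_ext (fun n => plus (rpow (h (x + INR n)) r) (rpow (h (x - INR (S n))) r))).
      intro n. reflexivity.
      apply (@ex_series_plus R_AbsRing R_NormedModule); auto using exA, exB.
  - intros r Hr. rewrite fr_sum by auto. rewrite <- Series_scal_l.
    apply Series_ext. intro n. unfold sm.
    assert (E : h (1 / 2 - INR (S n)) = h (1/2 + INR n)).
    { rewrite <- (h_even (1/2 + INR n)). rewrite S_INR. f_equal. field. }
    rewrite E. apply pair_eq, h_nonneg.
Qed.
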